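(* Let $h(w)=\sum_{s\in\mathcal S}\pi_s\,\frac{\phi_s^\top w-V_s}{\|\phi_s\|_2^2}\,\phi_s$ be the function tracked asymptotically by the Normalized Monte Carlo update $w_{k+1}=w_k-\alpha_k TP_k(w_k)$. Then the unique globally asymptotically stable equilibrium of the limiting ODE $\dot w(t)=-h(w(t))$ is $w^M=\big[(\Phi^\top NDN\Phi)^{-1}\Phi^\top NDN\big]V$.
   Context: $\mathcal S=\{1,\dots,m\}$ is the state space of an ergodic Markov chain with stationary distribution $\pi$, $D=\mathrm{diag}(\pi)$; $V\in\mathbb R^m$ is the value function; $\phi_s\in\mathbb R^n$ are nonzero features and $\Phi\in\mathbb R^{m\times n}$ (rows $\phi_s^\top$) has full column rank; $N$ is diagonal with $N_{(s,s)}=1/\|\phi_s\|_2$. $TP_k$ is the sampled normalized update $\frac1\tau\sum_{i=1}^\tau\frac{\phi_i^\top w-\widetilde V_i}{\|\phi_i\|^2}\phi_i$ over the distinct states of a sampled trajectory, whose conditional expectation is $h$. *)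

(* Defs.v *)
From HB Require Import structures.
From mathcomp Require Import all_boot all_order all_algebra.
From mathcomp Require Import all_classical all_reals all_analysis.
Set Implicit Arguments. Unset Strict Implicit. Unset Printing Implicit Defensive.
Import Order.TTheory GRing.Theory Num.Theory.
Import numFieldNormedType.Exports.
Local Open Scope ring_scope.
Local Open Scope classical_set_scope.

Definition stochastic (R : realType) (m : nat) (P : 'M[R]_m) : Prop :=
  (forall s t, 0 <= P s t) /\ (forall s, \sum_t P s t = 1).

(* Ergodic finite chain: irreducible and aperiodic, i.e. primitive. *)
Definition ergodic (R : realType) (m : nat) (P : 'M[R]_m) : Prop :=
  exists k : nat, forall s t, 0 < (P ^+ k) s t.

Definition stationary_dist (R : realType) (m : nat) (P : 'M[R]_m)
    (pi : 'rV[R]_m) : Prop :=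
  (forall s, 0 <= pi 0 s) /\ \sum_s pi 0 s = 1 /\ pi *m P = pi.

Definition feat (R : realType) (m n : nat) (Phi : 'M[R]_(m, n)) (s : 'I_m)
  : 'cV[R]_n := (row s Phi)^T.

Definition featsq (R : realType) (m n : nat) (Phi : 'M[R]_(m, n)) (s : 'I_m)
  : R := \sum_j (Phi s j) ^+ 2.

Definition hNMC (R : realType) (m n : nat) (pi : 'rV[R]_m)
    (Phi : 'M[R]_(m, n)) (V : 'cV[R]_m) (w : 'cV[R]_n) : 'cV[R]_n :=
  \sum_s (pi 0 s * (((feat Phi s)^T *m w) 0 0 - V s 0) / featsq Phi s)
           *: feat Phi s.

Definition Dmx (R : realType) (m : nat) (pi : 'rV[R]_m) : 'M[R]_m :=
  diag_mx pi.
Definition Nmx (R : realType) (m n : nat) (Phi : 'M[R]_(m, n)) : 'M[R]_m :=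
  diag_mx (\row_s (Num.sqrt (featsq Phi s))^-1).

Definition wM (R : realType) (m n : nat) (pi : 'rV[R]_m)
    (Phi : 'M[R]_(m, n)) (V : 'cV[R]_m) : 'cV[R]_n :=
  (invmx (Phi^T *m Nmx Phi *m Dmx pi *m Nmx Phi *m Phi)
     *m (Phi^T *m Nmx Phi *m Dmx pi *m Nmx Phi)) *m V.

Definition ode_solution (R : realType) (n : nat)
    (f : 'cV[R]_n -> 'cV[R]_n) (x : R -> 'cV[R]_n) : Prop :=
  forall t : R, is_derive t (1 : R) x (f (x t)).

Definition GAS_equilibrium (R : realType) (n : nat)
    (f : 'cV[R]_n -> 'cV[R]_n) (xs : 'cV[R]_n) : Prop :=
  f xs = 0 /\
  (forall eps : R, 0 < eps -> exists2 delta : R, 0 < delta &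
     forall x, ode_solution f x -> `|x 0 - xs| < delta ->
       forall t : R, 0 <= t -> `|x t - xs| < eps) /\
  (forall x, ode_solution f x -> x t @[t --> +oo] --> xs).

(* Main.v *)
Require Import Defs.
From HB Require Import structures.
From mathcomp Require Import all_boot all_order all_algebra.
From mathcomp Require Import all_classical all_reals all_analysis.
From mathcomp Require Import ring lra.
Import Order.TTheory GRing.Theory Num.Theory.
Import numFieldNormedType.Exports.
Set Implicit Arguments. Unset Strict Implicit. Unset Printing Implicit Defensive.
Local Open Scope ring_scope.

Lemma pi_pos (R : realType) (m : nat) (P : 'M[R]_m) (pi : 'rV[R]_m) :
  stochastic P -> ergodic P -> stationary_dist P pi -> forall s, 0 < pi 0 s.
Proof.
move=> _ [k Hk] [pi0 [pi1 piP]] t.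
have piPk : forall j, pi *m (P ^+ j) = pi.
  elim=> [|j IH]; first by rewrite expr0 mulmx1.
  by rewrite exprS mulmxA piP.
case: (pickP (fun s => 0 < pi 0 s)) => [s0 /= Hs0|H0]; last first.
  have : \sum_s pi 0 s = 0.
    apply: big1 => s _; apply/eqP; rewrite eq_le pi0 andbT.
    by have := H0 s; rewrite /= => /negbT; rewrite -leNgt.
  by rewrite pi1 => /eqP; rewrite oner_eq0.
rewrite -(piPk k) mxE (bigD1 s0) //=.
apply: (lt_le_trans (y := pi 0 s0 * (P ^+ k) s0 t)); first by rewrite mulr_gt0.
rewrite lerDl sumr_ge0 // => s _; rewrite mulr_ge0 //; exact: ltW.
Qed.
Lemma CS (R : realFieldType) m (a b : 'I_m -> R) :
  (\sum_s a s * b s) ^+ 2 <= (\sum_s a s ^+ 2) * (\sum_s b s ^+ 2).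
Proof.
have H : forall s t, 2 * ((a s * b s) * (a t * b t)) <=
   a s ^+ 2 * b t ^+ 2 + a t ^+ 2 * b s ^+ 2.
  move=> s t; rewrite -subr_ge0.
  suff -> : a s ^+ 2 * b t ^+ 2 + a t ^+ 2 * b s ^+ 2 - 2 * (a s * b s * (a t * b t))
     = (a s * b t - a t * b s) ^+ 2 by apply: sqr_ge0.
  by ring.
have E : (\sum_s a s * b s) ^+ 2 = \sum_s \sum_t (a s * b s) * (a t * b t).
  by rewrite expr2 mulr_suml; apply: eq_bigr => s _; rewrite mulr_sumr.
have F : (\sum_s a s ^+ 2) * (\sum_s b s ^+ 2) = \sum_s \sum_t a s ^+ 2 * b t ^+ 2.
  by rewrite mulr_suml; apply: eq_bigr => s _; rewrite mulr_sumr.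
have G : (\sum_s a s ^+ 2) * (\sum_s b s ^+ 2) = \sum_s \sum_t a t ^+ 2 * b s ^+ 2.
  by rewrite F exchange_big.
rewrite -(@ler_pM2l _ 2) // E.
apply: (le_trans (y := \sum_s \sum_t (a s ^+ 2 * b t ^+ 2 + a t ^+ 2 * b s ^+ 2))).
  rewrite mulr_sumr; apply: ler_sum => s _; rewrite mulr_sumr; apply: ler_sum => t _.
  exact: H.
rewrite le_eqVlt; apply/orP; left; apply/eqP.
have -> : \sum_s \sum_t (a s ^+ 2 * b t ^+ 2 + a t ^+ 2 * b s ^+ 2) =
  \sum_s \sum_t a s ^+ 2 * b t ^+ 2 + \sum_s \sum_t a t ^+ 2 * b s ^+ 2.
  by rewrite -big_split; apply: eq_bigr => s _; rewrite big_split.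
by rewrite -F -G mulr2n mulrDl !mul1r.
Qed.

Definition Wt (R : realType) m n (pi : 'rV[R]_m) (Phi : 'M[R]_(m, n)) s :=
  pi 0 s / featsq Phi s.
Definition Wd (R : realType) m n (pi : 'rV[R]_m) (Phi : 'M[R]_(m, n)) :=
  diag_mx (\row_s Wt pi Phi s).
Definition Bm (R : realType) m n (pi : 'rV[R]_m) (Phi : 'M[R]_(m, n)) :=
  Phi^T *m Nmx Phi *m Dmx pi *m Nmx Phi.

Lemma featsq_ge0 (R : realType) m n (Phi : 'M[R]_(m, n)) s : 0 <= featsq Phi s.
Proof. by rewrite /featsq sumr_ge0 // => j _; exact: sqr_ge0. Qed.

Lemma featsq_gt0 (R : realType) m n (Phi : 'M[R]_(m, n)) s :
  feat Phi s != 0 -> 0 < featsq Phi s.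
Proof.
move=> Hf; rewrite lt_def featsq_ge0 andbT; apply/negP => /eqP H.
move/negP: Hf; apply; apply/eqP/matrixP => j i.
have := @psumr_eq0P _ _ predT (fun j => Phi s j ^+ 2) (fun j _ => sqr_ge0 _) H j isT.
by rewrite !mxE => /eqP; rewrite sqrf_eq0 => /eqP ->.
Qed.

Lemma BmE (R : realType) m n (pi : 'rV[R]_m) (Phi : 'M[R]_(m, n)) :
  Bm pi Phi = Phi^T *m Wd pi Phi.
Proof.
rewrite /Bm /Nmx /Dmx /Wd !mul_mx_diag; apply/matrixP => j s; rewrite !mxE.
rewrite /Wt.
have E : (featsq Phi s)^-1 = (Num.sqrt (featsq Phi s))^-1 * (Num.sqrt (featsq Phi s))^-1.
  by rewrite -invfM -expr2 sqr_sqrtr // featsq_ge0.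
rewrite E; ring.
Qed.

Lemma hE (R : realType) m n (pi : 'rV[R]_m) (Phi : 'M[R]_(m, n)) V w :
  hNMC pi Phi V w = Bm pi Phi *m (Phi *m w - V).
Proof.
rewrite BmE /Wd mul_mx_diag /hNMC; apply/matrixP => j i.
rewrite summxE !mxE; apply: eq_bigr => s _.
rewrite !mxE /Wt /feat.
have -> : i = 0 by apply/val_inj; case: i => [[|//]] ?.
have -> : (\sum_j0 ((row s Phi)^T)^T 0 j0 * w j0 0) = \sum_j0 Phi s j0 * w j0 0.
  by apply: eq_bigr => k _; rewrite !mxE.
ring.
Qed.

Lemma quadE (R : realType) m n (pi : 'rV[R]_m) (Phi : 'M[R]_(m, n)) (u : 'rV[R]_n) :
  (u *m (Bm pi Phi *m Phi) *m u^T) 0 0 =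
  \sum_s Wt pi Phi s * ((u *m Phi^T) 0 s) ^+ 2.
Proof.
rewrite BmE !mulmxA -[Phi in _ *m Phi *m _]trmxK -mulmxA -trmx_mul.
rewrite mul_mx_diag !mxE; apply: eq_bigr => s _; rewrite !mxE; ring.
Qed.

Lemma A_unit (R : realType) m n (pi : 'rV[R]_m) (Phi : 'M[R]_(m, n)) :
  (forall s, 0 < Wt pi Phi s) -> row_full Phi -> Bm pi Phi *m Phi \in unitmx.
Proof.
move=> Wpos /row_fullP [L HL].
rewrite -row_free_unit; apply: inj_row_free => v Hv.
have := quadE pi Phi v; rewrite Hv mul0mx mxE => /esym H.
have Hy : v *m Phi^T = 0.
  apply/matrixP => i s; rewrite (ord1 i) [RHS]mxE.
  have := @psumr_eq0P _ _ predT (fun s => Wt pi Phi s * ((v *m Phi^T) 0 s) ^+ 2)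
     (fun s _ => mulr_ge0 (ltW (Wpos s)) (sqr_ge0 _)) H s isT.
  move/eqP; rewrite mulf_eq0 (gt_eqF (Wpos s)) /= sqrf_eq0 => /eqP ->.
  done.
have : v^T = 0.
  by rewrite -[v^T]mul1mx -HL -mulmxA -[Phi]trmxK -trmx_mul Hy trmx0 mulmx0.
by move/(congr1 trmx); rewrite trmxK trmx0.
Qed.

Lemma hdiff (R : realType) m n (pi : 'rV[R]_m) (Phi : 'M[R]_(m, n)) V w :
  Bm pi Phi *m Phi \in unitmx ->
  hNMC pi Phi V w = (Bm pi Phi *m Phi) *m (w - wM pi Phi V).
Proof.
move=> U; rewrite hE /wM -/(Bm pi Phi) mulmxBr mulmxBr !mulmxA.
by rewrite mulmxV // mul1mx.
Qed.

Lemma coerc (R : realType) m n (pi : 'rV[R]_m) (Phi : 'M[R]_(m, n)) :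
  (forall s, 0 < Wt pi Phi s) -> row_full Phi ->
  exists2 c : R, 0 < c & forall e : 'cV[R]_n,
    c * \sum_i (e i 0) ^+ 2 <= (e^T *m (Bm pi Phi *m Phi) *m e) 0 0.
Proof.
move=> Wpos /row_fullP [L HL].
set K := \sum_i \sum_s L i s ^+ 2.
set M := \sum_s (Wt pi Phi s)^-1.
have K0 : 0 <= K by apply: sumr_ge0 => i _; apply: sumr_ge0 => s _; apply: sqr_ge0.
have M0 : 0 <= M by apply: sumr_ge0 => s _; rewrite invr_ge0 ltW.
exists (K * M + 1)^-1; first by rewrite invr_gt0 ltr_wpDl // mulr_ge0.
move=> e.
have -> : e^T *m (Bm pi Phi *m Phi) *m e = e^T *m (Bm pi Phi *m Phi) *m (e^T)^T.
  by rewrite trmxK.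
rewrite quadE.
set y := Phi *m e.
have Ey : forall s, (e^T *m Phi^T) 0 s = y s 0.
  by move=> s; rewrite -trmx_mul mxE.
rewrite (eq_bigr (fun s => Wt pi Phi s * y s 0 ^+ 2)); last first.
  by move=> s _; rewrite Ey.
set Q := \sum_(i < m) Wt pi Phi i * y i 0 ^+ 2.
have Q0 : 0 <= Q by apply: sumr_ge0 => s _; rewrite mulr_ge0 ?sqr_ge0 // ltW.
set Y := \sum_(t < m) (y t 0) ^+ 2.
have Ee : forall i, e i 0 = \sum_s L i s * y s 0.
  move=> i; have : e = L *m y by rewrite /y mulmxA HL mul1mx.
  by move=> {1}->; rewrite mxE.
have H1 : \sum_i (e i 0) ^+ 2 <= K * Y.
  rewrite /K mulr_suml; apply: ler_sum => i _; rewrite Ee; exact: CS.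
have H2 : Y <= M * Q.
  rewrite /M /Q mulr_sumr; apply: ler_sum => s _.
  have {1}-> : y s 0 ^+ 2 = (Wt pi Phi s)^-1 * (Wt pi Phi s * y s 0 ^+ 2).
    by rewrite mulrA mulVf ?mul1r // gt_eqF.
  apply: ler_wpM2r; first by rewrite mulr_ge0 ?sqr_ge0 // ltW.
  rewrite (bigD1 s) //= lerDl; apply: sumr_ge0 => t _; rewrite invr_ge0 ltW //.
rewrite ler_pdivrMl ?ltr_wpDl ?mulr_ge0 //.
apply: (le_trans H1); apply: (le_trans (ler_wpM2l K0 H2)).
by rewrite mulrA mulrDl mul1r lerDl.
Qed.
Lemma comp_derive (R : realType) n (x : R -> 'cV[R]_n) (t : R) df :
  is_derive t (1 : R) x df -> forall i j, is_derive t (1 : R) (fun s => x s i j) (df i j).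
Proof.
move=> [Hd Hv] i j.
have Hdij := (derivable_mxP x t 1).1 Hd i j.
apply: DeriveDef => //.
by rewrite -Hv derive_mx // mxE.
Qed.

Lemma sq_derive (R : realType) (f : R -> R) t df :
  is_derive t (1 : R) f df -> is_derive t (1 : R) (fun s => f s ^+ 2) (2 * f t * df).
Proof.
move=> H.
have := is_deriveM H H.
have -> : (f * f) = (fun s => f s ^+ 2) by apply/funext => s; rewrite /= expr2.
move=> H2; apply: is_derive_eq H2 _.
rewrite /GRing.scale /=; ring.
Qed.

Lemma sum_derive (R : realType) n (f : 'I_n -> R -> R) t df :
  (forall i, is_derive t (1 : R) (f i) (df i)) ->
  is_derive t (1 : R) (fun s => \sum_i f i s) (\sum_i df i).
Proof.
move=> H; have := is_derive_sum H.
have -> : (\sum_(i < n) f i) = (fun s => \sum_i f i s).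
  by apply/funext => s; rewrite fct_sumE.
by [].
Qed.

Lemma lin_derive (R : realType) (a b t : R) :
  is_derive t (1 : R) (fun s => a + b * s) b.
Proof.
have H := is_deriveD (is_derive_cst a t 1) (is_deriveZ b (is_derive_id t (1:R))).
have -> : (fun s => a + b * s) = (cst a + b *: id) by apply/funext => s.
by apply: is_derive_eq H _; rewrite add0r /GRing.scale /= mulr1.
Qed.

Lemma nincr0 (R : realType) (g dg : R -> R) :
  (forall t, is_derive t (1 : R) g (dg t)) -> (forall t, 0 < t -> dg t <= 0) ->
  forall t, 0 <= t -> g t <= g 0.
Proof.
move=> Hd Hneg t t0.
have cg : continuous g.
  move=> s; apply: differentiable_continuous; apply/derivable1_diffP.
  by case: (Hd s).
apply: (@ler0_derive1_nincry R g 0) => //.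
- move=> s; rewrite in_itv /= andbT => s0.
  by rewrite derive1E (@derive_val _ _ _ _ _ _ _ (Hd s)); apply: Hneg.
- exact: continuous_subspaceT.
Qed.

Lemma lyap (R : realType) n (A : 'M[R]_n) (xs : 'cV[R]_n) (c : R) (x : R -> 'cV[R]_n) :
  0 < c -> (forall e : 'cV[R]_n, c * \sum_i (e i 0) ^+ 2 <= (e^T *m A *m e) 0 0) ->
  (forall t, is_derive t (1 : R) x (- (A *m (x t - xs)))) ->
  forall t, 0 <= t ->
    (\sum_i ((x t - xs) i 0) ^+ 2) * (1 + 2 * c * t) <= \sum_i ((x 0 - xs) i 0) ^+ 2.
Proof.
move=> c0 Hc Hx.
pose Vf := fun s => \sum_i ((x s - xs) i 0) ^+ 2.
pose d := fun s => - (A *m (x s - xs)).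
have Hy : forall t i, is_derive t (1 : R) (fun s => (x s - xs) i 0) (d t i 0).
  move=> t i.
  have H1 := comp_derive (Hx t) i 0.
  have H2 := is_deriveB H1 (is_derive_cst (xs i 0) t 1).
  have -> : (fun s => (x s - xs) i 0) = (fun s => x s i 0) - cst (xs i 0).
    by apply/funext => s; rewrite !mxE.
  by apply: is_derive_eq H2 _; rewrite subr0.
have HV : forall t, is_derive t (1 : R) Vf (\sum_i 2 * (x t - xs) i 0 * d t i 0).
  move=> t; apply: sum_derive => i; exact: sq_derive.
have Hg : forall t, is_derive t (1 : R) (fun s => Vf s * (1 + 2 * c * s))
   (Vf t * (2 * c) + (1 + 2 * c * t) * \sum_i 2 * (x t - xs) i 0 * d t i 0).
  move=> t; have H := is_deriveM (HV t) (lin_derive 1 (2 * c) t).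
  have -> : (fun s => Vf s * (1 + 2 * c * s)) = Vf * (fun s => 1 + 2 * c * s).
    by apply/funext.
  by apply: is_derive_eq H _.
have := nincr0 Hg.
have V0 : Vf 0 * (1 + 2 * c * 0) = Vf 0 by rewrite mulr0 addr0 mulr1.
rewrite V0; apply => t t0.
set y := x t - xs.
have Hq : \sum_i 2 * y i 0 * d t i 0 = - (2 * (y^T *m A *m y) 0 0).
  rewrite -mulmxA mxE -mulrN -sumrN mulr_sumr; apply: eq_bigr => i _.
  by rewrite /d !mxE; ring.
rewrite Hq.
have Vp : 0 <= Vf t by apply: sumr_ge0 => i _; exact: sqr_ge0.
have := Hc y; rewrite -/(Vf t) => Hcy.
set q := (y^T *m A *m y) 0 0 in Hq Hcy *.
set v := Vf t in Vp Hcy *.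
have h1 : (1 + 2 * c * t) * (c * v) <= (1 + 2 * c * t) * q.
  apply: ler_wpM2l => //.
  have : 0 <= c * t by rewrite mulr_ge0 // ltW.
  lra.
have h2 : 0 <= c * c * t * v by rewrite !mulr_ge0 // ltW.
nra.
Qed.

Lemma entry_le_norm (R : realType) n (e : 'cV[R]_n) i : `|e i 0| <= `|e|.
Proof.
rewrite [leRHS]/Num.Def.normr /= mx_normrE.
by apply: le_trans (le_bigmax _ _ (i, 0)).
Qed.

Lemma norm_lt (R : realType) n (e : 'cV[R]_n) (eps : R) :
  0 < eps -> \sum_i (e i 0) ^+ 2 < eps ^+ 2 -> `|e| < eps.
Proof.
move=> e0 H.
rewrite [ltLHS]/Num.Def.normr /= mx_normrE.
apply: bigmax_lt => // -[i j] _ /=.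
rewrite (ord1 j).
have h1 : (e i 0) ^+ 2 <= \sum_i (e i 0) ^+ 2.
  by rewrite (bigD1 i) //= lerDl sumr_ge0 // => k _; exact: sqr_ge0.
have h2 : `|e i 0| ^+ 2 = (e i 0) ^+ 2 by rewrite real_normK // num_real.
have h3 : 0 <= `|e i 0| by [].
nra.
Qed.

Lemma sum_le_norm (R : realType) n (e : 'cV[R]_n) :
  \sum_i (e i 0) ^+ 2 <= n%:R * `|e| ^+ 2.
Proof.
apply: (le_trans (y := \sum_(i < n) `|e| ^+ 2)).
  apply: ler_sum => i _; rewrite -real_normK ?num_real //.
  by rewrite lerXn2r ?nnegrE // entry_le_norm.
by rewrite sumr_const card_ord mulr_natl.
Qed.

Theorem proposition5 (R : realType) (m n : nat)
    (P : 'M[R]_m) (pi : 'rV[R]_m) (Phi : 'M[R]_(m, n)) (V : 'cV[R]_m) :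
  stochastic P -> ergodic P -> stationary_dist P pi ->
  (forall s, feat Phi s != 0) ->
  \rank Phi = n ->
  GAS_equilibrium (fun w => - hNMC pi Phi V w) (wM pi Phi V) /\
  (forall w', GAS_equilibrium (fun w => - hNMC pi Phi V w) w' ->
     w' = wM pi Phi V).
Proof.
move=> sto erg st nz rk.
have piP := pi_pos sto erg st.
have Wpos : forall s, 0 < Wt pi Phi s.
  by move=> s; rewrite /Wt divr_gt0 // featsq_gt0.
have rf : row_full Phi by rewrite /row_full rk.
have U := A_unit Wpos rf.
have [c c0 Hc] := coerc Wpos rf.
set A := Bm pi Phi *m Phi in U Hc.
set xs := wM pi Phi V.
have fE : forall w, - hNMC pi Phi V w = - (A *m (w - xs)).
  by move=> w; rewrite hdiff.
have Hode : forall x, ode_solution (fun w => - hNMC pi Phi V w) x ->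
    forall t, is_derive t (1 : R) x (- (A *m (x t - xs))).
  by move=> x Hx t; rewrite -fE; exact: Hx.
split; last first.
  move=> w' [H0 _]; move: H0; rewrite fE => /eqP; rewrite oppr_eq0 => /eqP H0.
  apply/eqP; rewrite -subr_eq0; apply/eqP.
  by rewrite -(mulKmx U (w' - xs)) H0 mulmx0.
split; first by rewrite fE subrr mulmx0 oppr0.
split.
  move=> eps eps0; exists (eps / (n%:R + 1)).
    by rewrite divr_gt0 // ltr_wpDl.
  move=> x Hx Hx0 t t0.
  have L := lyap c0 Hc (Hode x Hx) t0.
  apply: norm_lt => //.
  set Vt := \sum_i _ in L *; set V0 := \sum_i _ in L.
  have Vt0 : 0 <= Vt by apply: sumr_ge0 => i _; exact: sqr_ge0.
  have HV0 : V0 <= n%:R * `|x 0 - xs| ^+ 2 by apply: sum_le_norm.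
  have HVt : Vt <= V0.
    apply: le_trans L; rewrite ler_peMr // lerDl.
    by rewrite mulr_ge0 // mulr_ge0 // ltW.
  set d := eps / (n%:R + 1) in Hx0.
  have n0 : 0 <= n%:R :> R by [].
  have d0 : 0 < d by rewrite divr_gt0 // ltr_wpDl.
  have hd : (n%:R + 1) * d = eps by rewrite /d mulrC divfK // gt_eqF // ltr_wpDl.
  clearbody d.
  have Hn : 0 <= `|x 0 - xs| by [].
  have h1 : `|x 0 - xs| ^+ 2 <= d ^+ 2 by rewrite lerXn2r ?nnegrE // ltW.
  have h2 : n%:R * `|x 0 - xs| ^+ 2 <= n%:R * d ^+ 2 by rewrite ler_wpM2l.
  have h3 : n%:R * d ^+ 2 < eps ^+ 2.
    rewrite -hd exprMn -subr_gt0.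
    have -> : (n%:R + 1) ^+ 2 * d ^+ 2 - n%:R * d ^+ 2
      = (n%:R * n%:R + n%:R + 1) * d ^+ 2 :> R by ring.
    apply: mulr_gt0; last by rewrite exprn_gt0.
    have := mulr_ge0 n0 n0; lra.
  lra.
move=> x Hx; apply/cvgrPdist_lt => eps eps0.
have L := lyap c0 Hc (Hode x Hx).
set V0 := \sum_i ((x 0 - xs) i 0) ^+ 2 in L.
have V00 : 0 <= V0 by apply: sumr_ge0 => i _; exact: sqr_ge0.
near=> t.
have t0 : 0 < t by near: t; apply: nbhs_pinfty_gt; rewrite num_real.
have tT : V0 / (2 * c * eps ^+ 2) < t by near: t; apply: nbhs_pinfty_gt; rewrite num_real.
rewrite -normrN opprB; apply: norm_lt => //.
have Lt := L t (ltW t0).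
set Vt := \sum_i _ in Lt.
have Vt0 : 0 <= Vt by apply: sumr_ge0 => i _; exact: sqr_ge0.
have ce : 0 < 2 * c * eps ^+ 2 by rewrite !mulr_gt0 // exprn_gt0.
have h1 : V0 < 2 * c * eps ^+ 2 * t by rewrite -ltr_pdivrMl // mulrC.
have h2 : Vt * (1 + 2 * c * t) < eps ^+ 2 * (1 + 2 * c * t).
  apply: le_lt_trans Lt _; have : 0 < eps ^+ 2 by rewrite exprn_gt0.
  move=> e2; nra.
rewrite -(ltr_pM2r (x := 1 + 2 * c * t)) //.
by rewrite ltr_wpDr // mulr_ge0 // mulr_ge0 // ltW.
Unshelve. all: end_near.
Qed.
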